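(* Let $\mathcal{G}_N$ (the Newton group) be the group of transformations of $\mathbb{R}^4=\mathbb{R}^3\times\mathbb{R}$ of the form $(\mathbf{x},x^4)\mapsto(S\mathbf{x},x^4)+b$ with $S\in SO(3)$ and $b\in\mathbb{R}^4$. An equivalence relation on $\mathbb{R}^4$ is $\mathcal{G}_N$-invariant if and only if there is an additive subgroup $H$ of $\mathbb{R}$ such that either (i) the equivalence class of every $x$ is $[x]=x+(\{\mathbf{0}\}\times H)$, or (ii) the equivalence class of every $x$ is $[x]=x+(\mathbb{R}^3\times H)$.
   Context: An equivalence relation $\sim$ on $\mathbb{R}^4$ is $\mathcal{G}_N$-invariant if $x\sim y$ implies $g(x)\sim g(y)$ for all $x,y$ and all $g\in\mathcal{G}_N$. *)

(* Defs.v *)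
From HB Require Import structures.
From mathcomp Require Import all_boot all_order all_algebra.
From mathcomp Require Import reals.
Global Set Implicit Arguments. Global Unset Strict Implicit.
Import Order.TTheory GRing.Theory Num.Theory.
Local Open Scope ring_scope.

Definition pt (R : realType) := ('cV[R]_3 * R)%type.

Definition SO3 {R : realType} (S : 'M[R]_3) : Prop :=
  S^T *m S = 1%:M /\ \det S = 1.

Definition newton_map {R : realType} (S : 'M[R]_3) (b : pt R) (p : pt R) : pt R :=
  (S *m p.1 + b.1, p.2 + b.2).

Definition is_equivalence_R4 {R : realType} (r : pt R -> pt R -> Prop) : Prop :=
  (forall x, r x x) /\ (forall x y, r x y -> r y x) /\
  (forall x y z, r x y -> r y z -> r x z).

Definition GN_invariant {R : realType} (r : pt R -> pt R -> Prop) : Prop :=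
  forall S b, SO3 S -> forall x y, r x y -> r (newton_map S b x) (newton_map S b y).

Definition additive_subgroup {R : realType} (H : R -> Prop) : Prop :=
  H 0 /\ (forall a c, H a -> H c -> H (a - c)).

(* Main.v *)
Require Import Defs.
From HB Require Import structures.
From mathcomp Require Import all_boot all_order all_algebra.
From mathcomp Require Import reals.
From mathcomp Require Import ring lra.
From Stdlib Require Import Classical.
Import Order.TTheory GRing.Theory Num.Theory.
Local Open Scope ring_scope.

Definition m33 {R : realType} (a b c d e f g h i : R) : 'M[R]_3 :=
  \matrix_(i0, j0) nth 0 [:: a; b; c; d; e; f; g; h; i] (3 * i0 + j0).

Definition v3 {R : realType} (x y z : R) : 'cV[R]_3 :=
  \matrix_(i0, j0) nth 0 [:: x; y; z] i0.

Lemma det_m33 {R : realType} (a b c d e f g h i : R) : \det (m33 a b c d e f g h i) =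
  a * (e * i - f * h) - b * (d * i - f * g) + c * (d * h - e * g).
Proof.
rewrite (expand_det_row _ 0) !big_ord_recr big_ord0 /= /cofactor.
rewrite !(expand_det_row _ 0) !big_ord_recr !big_ord0 /= /cofactor.
rewrite !det_mx11 !mxE /=.
rewrite !expr0 !expr1 /=. ring.
Qed.

Lemma ord3_cases (i : 'I_3) : i = 0 \/ i = 1 \/ i = 2.
Proof.
case: i => [[|[|[|k]]] Hk] //.
- by left; apply: val_inj.
- by right; left; apply: val_inj.
- by right; right; apply: val_inj.
Qed.

Lemma eq_M3 {R : realType} (A B : 'M[R]_3) :
  A 0 0 = B 0 0 -> A 0 1 = B 0 1 -> A 0 2 = B 0 2 ->
  A 1 0 = B 1 0 -> A 1 1 = B 1 1 -> A 1 2 = B 1 2 ->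
  A 2 0 = B 2 0 -> A 2 1 = B 2 1 -> A 2 2 = B 2 2 -> A = B.
Proof.
move=> ? ? ? ? ? ? ? ? ?; apply/matrixP => i j.
by case: (ord3_cases i) => [|[|]] ->; case: (ord3_cases j) => [|[|]] ->.
Qed.

Lemma eq_cV3 {R : realType} (u w : 'cV[R]_3) :
  u 0 0 = w 0 0 -> u 1 0 = w 1 0 -> u 2 0 = w 2 0 -> u = w.
Proof.
move=> h0 h1 h2; apply/matrixP => i j.
rewrite (ord1 j).
case: i => [[|[|[|k]]] Hk] //.
- by rewrite (_ : Ordinal Hk = 0) //; apply: val_inj.
- by rewrite (_ : Ordinal Hk = 1) //; apply: val_inj.
- by rewrite (_ : Ordinal Hk = 2) //; apply: val_inj.
Qed.

Ltac msolve :=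
  apply: eq_M3; rewrite !mxE ?big_ord_recr ?big_ord0 /= ?mxE /=.

Ltac vsolve :=
  apply: eq_cV3; rewrite !mxE ?big_ord_recr ?big_ord0 /= ?mxE /=.

Lemma one_m33 {R : realType} : (1%:M : 'M[R]_3) = m33 1 0 0 0 1 0 0 0 1.
Proof. by msolve. Qed.

Ltac cs_solve h := first [ring | (rewrite -[RHS]h; ring)].

Lemma SO3_rz {R : realType} (c s : R) : c * c + s * s = 1 ->
  SO3 (m33 c (-s) 0 s c 0 0 0 1).
Proof.
move=> hcs; split; first by rewrite one_m33; msolve; cs_solve hcs.
by rewrite det_m33; cs_solve hcs.
Qed.

Lemma SO3_rx {R : realType} (c s : R) : c * c + s * s = 1 ->
  SO3 (m33 1 0 0 0 c (-s) 0 s c).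
Proof.
move=> hcs; split; first by rewrite one_m33; msolve; cs_solve hcs.
by rewrite det_m33; cs_solve hcs.
Qed.

Lemma SO3_ry {R : realType} (c s : R) : c * c + s * s = 1 ->
  SO3 (m33 c 0 s 0 1 0 (-s) 0 c).
Proof.
move=> hcs; split; first by rewrite one_m33; msolve; cs_solve hcs.
by rewrite det_m33; cs_solve hcs.
Qed.

Lemma mul_m33_v3 {R : realType} (a b c d e f g h i x y z : R) :
  m33 a b c d e f g h i *m v3 x y z =
  v3 (a * x + b * y + c * z) (d * x + e * y + f * z) (g * x + h * y + i * z).
Proof. by vsolve; ring. Qed.

Lemma v3_eta {R : realType} (w : 'cV[R]_3) : w = v3 (w 0 0) (w 1 0) (w 2 0).
Proof. by vsolve. Qed.

Lemma v3_add {R : realType} (x y z x' y' z' : R) :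
  v3 x y z + v3 x' y' z' = v3 (x + x') (y + y') (z + z').
Proof. by vsolve. Qed.

Lemma v3_sub {R : realType} (x y z x' y' z' : R) :
  v3 x y z - v3 x' y' z' = v3 (x - x') (y - y') (z - z').
Proof. by vsolve. Qed.

Lemma v3_eq {R : realType} (x y z x' y' z' : R) :
  x = x' -> y = y' -> z = z' -> v3 x y z = v3 x' y' z'.
Proof. by move=> -> -> ->. Qed.

Lemma v3_0 {R : realType} : v3 0 0 0 = 0 :> 'cV[R]_3.
Proof. by vsolve. Qed.

Lemma SO3_1 {R : realType} : SO3 (1%:M : 'M[R]_3).
Proof. by split; rewrite ?trmx1 ?mul1mx ?det1. Qed.

Definition Kc {R : realType} (r : pt R -> pt R -> Prop) (p : pt R) : Prop :=
  r (0, 0) p.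

Lemma r_trans_inv {R : realType} (r : pt R -> pt R -> Prop) :
  GN_invariant r -> forall (b : pt R) x y,
  r x y -> r (x.1 + b.1, x.2 + b.2) (y.1 + b.1, y.2 + b.2).
Proof.
move=> hG b x y hxy; have := hG 1%:M b SO3_1 x y hxy.
by rewrite /newton_map !mul1mx.
Qed.

Lemma r_K {R : realType} (r : pt R -> pt R -> Prop) :
  is_equivalence_R4 r -> GN_invariant r -> forall x y : pt R,
  r x y <-> Kc r (y.1 - x.1, y.2 - x.2).
Proof.
move=> [hr [hs ht]] hG [x1 x2] [y1 y2] /=; split => h.
  have := r_trans_inv hG (- x1, - x2) h; rewrite /= !subrr.
  by [].
have := r_trans_inv hG (x1, x2) h; rewrite /= !add0r !subrK.
by [].
Qed.

Lemma K_sub {R : realType} (r : pt R -> pt R -> Prop) :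
  is_equivalence_R4 r -> GN_invariant r -> forall p q : pt R,
  Kc r p -> Kc r q -> Kc r (p.1 - q.1, p.2 - q.2).
Proof.
move=> he hG p q hp hq.
have [hr [hs ht]] := he.
have hqp : r q p by apply: ht (hs _ _ hq) hp.
by have /(r_K he hG) := hqp.
Qed.

Lemma K_add {R : realType} (r : pt R -> pt R -> Prop) :
  is_equivalence_R4 r -> GN_invariant r -> forall p q : pt R,
  Kc r p -> Kc r q -> Kc r (p.1 + q.1, p.2 + q.2).
Proof.
move=> he hG p q hp hq.
have h0 : Kc r (0, 0) by case: he => hr _; apply: hr.
have := K_sub he hG hp (K_sub he hG h0 hq); rewrite /= !sub0r !opprK.
by [].
Qed.

Lemma K_rot {R : realType} (r : pt R -> pt R -> Prop) :
  GN_invariant r -> forall S (p : pt R), SO3 S ->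
  Kc r p -> Kc r (S *m p.1, p.2).
Proof.
move=> hG S p hS hp; have := hG S (0, 0) hS _ _ hp.
by rewrite /newton_map /= mulmx0 !addr0.
Qed.

Lemma K0_line {R : realType} (r : pt R -> pt R -> Prop) :
  is_equivalence_R4 r -> GN_invariant r -> forall s0 : R, s0 != 0 ->
  Kc r (v3 s0 0 0, 0) -> forall x, Kc r (v3 x 0 0, 0).
Proof.
move=> he hG s0 s0n0 hs0.
have step : forall t : R, -1 <= t <= 1 -> Kc r (v3 ((t *+ 2) * s0) 0 0, 0).
  move=> t /andP[t1 t2].
  have ht : 0 <= 1 - t ^+ 2 by nra.
  set s := Num.sqrt (1 - t ^+ 2).
  have hss : s * s = 1 - t ^+ 2 by rewrite -expr2 sqr_sqrtr.
  have h1 : t * t + s * s = 1 by rewrite hss; ring.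
  have h2 : t * t + (- s) * (- s) = 1 by rewrite mulrNN.
  have k1 := K_rot hG (SO3_rz h1) hs0.
  have k2 := K_rot hG (SO3_rz h2) hs0.
  have := K_add he hG k1 k2.
  rewrite /= !mul_m33_v3 v3_add addr0 => H.
  set w := (X in Kc r (X, 0)) in H.
  suff -> : v3 ((t *+ 2) * s0) 0 0 = w by [].
  by rewrite /w; apply: v3_eq; ring.
have mult : forall y (n : nat), Kc r (v3 y 0 0, 0) -> Kc r (v3 (y *+ n) 0 0, 0).
  move=> y n hy; elim: n => [|n IH].
    by rewrite mulr0n v3_0; case: he => hr _; apply: hr.
  have := K_add he hG hy IH; rewrite /= v3_add !addr0 -mulrS.
  by [].
move=> x.
set q := x / (s0 *+ 2).
set n := Num.bound `|q|.
have hn : `|q| < n%:R by apply: archi_boundP.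
have n0 : n%:R != 0 :> R.
  by apply: lt0r_neq0; apply: le_lt_trans hn.
set t := q / n%:R.
have : -1 <= t <= 1.
  rewrite -ler_norml /t normrM normfV normr_nat.
  by rewrite ler_pdivrMr ?mul1r ?ltW // (le_lt_trans _ hn).
move=> /step H.
have e : (t *+ 2 * s0) *+ n = x.
  rewrite /t /q !mulr2n -mulr_natr; field.
  by rewrite n0 -mulr2n mulrn_eq0 negb_or s0n0.
by move: (mult _ n H); rewrite e.
Qed.

Lemma Kc_eq {R : realType} (r : pt R -> pt R -> Prop) u t u' t' :
  Kc r (u, t) -> u = u' -> t = t' -> Kc r (u', t').
Proof. by move=> h <- <-. Qed.

Lemma K0_all {R : realType} (r : pt R -> pt R -> Prop) :
  is_equivalence_R4 r -> GN_invariant r -> forall p : pt R,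
  Kc r p -> p.1 != 0 -> forall w, Kc r (w, 0).
Proof.
move=> he hG p hp hp1.
have D : forall S, SO3 S -> Kc r (S *m p.1 - p.1, 0).
  move=> S hS; have := K_sub he hG (K_rot hG hS hp) hp.
  by rewrite /= subrr.
move: hp1 D; rewrite (v3_eta p.1).
set a := p.1 0 0; set b := p.1 1 0; set c := p.1 2 0 => hv D.
have hm : (-1 : R) * (-1) + 0 * 0 = 1 by ring.
have h01 : (0 : R) * 0 + 1 * 1 = 1 by ring.
have A := D _ (SO3_rz hm); have B := D _ (SO3_ry hm); have C := D _ (SO3_rx hm).
rewrite !mul_m33_v3 !v3_sub in A B C.
have hx : Kc r (v3 (a * 4) 0 0, 0).
  apply: (Kc_eq (K_sub he hG (K_sub he hG C A) B)); rewrite /= ?v3_sub;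
    [apply: v3_eq; ring | ring].
have hy : Kc r (v3 0 (b * 4) 0, 0).
  apply: (Kc_eq (K_sub he hG (K_sub he hG B A) C)); rewrite /= ?v3_sub;
    [apply: v3_eq; ring | ring].
have hz : Kc r (v3 0 0 (c * 4), 0).
  apply: (Kc_eq (K_sub he hG (K_sub he hG A B) C)); rewrite /= ?v3_sub;
    [apply: v3_eq; ring | ring].
have four : (4 : R) != 0 by rewrite pnatr_eq0.
have [s0 [s0n0 hs0]] : exists s0 : R, s0 != 0 /\ Kc r (v3 s0 0 0, 0).
  case: (eqVneq a 0) => ha; last first.
    by exists (a * 4); split => //; rewrite mulf_neq0.
  case: (eqVneq b 0) => hb; last first.
    exists (- (b * 4)); split; first by rewrite oppr_eq0 mulf_neq0.
    apply: (Kc_eq (K_rot hG (SO3_rz h01) hy)); rewrite /= ?mul_m33_v3;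
      [apply: v3_eq; ring | ring].
  case: (eqVneq c 0) => hc; last first.
    exists (c * 4); split; first by rewrite mulf_neq0.
    apply: (Kc_eq (K_rot hG (SO3_ry h01) hz)); rewrite /= ?mul_m33_v3;
      [apply: v3_eq; ring | ring].
  by move: hv; rewrite ha hb hc v3_0 eqxx.
have L := K0_line he hG s0n0 hs0.
move=> w; rewrite (v3_eta w).
have Y : forall y, Kc r (v3 0 y 0, 0).
  move=> y; apply: (Kc_eq (K_rot hG (SO3_rz h01) (L y))); rewrite /= ?mul_m33_v3;
    [apply: v3_eq; ring | ring].
have Z : forall z, Kc r (v3 0 0 z, 0).
  move=> z; apply: (Kc_eq (K_rot hG (SO3_ry h01) (L (- z))));
    rewrite /= ?mul_m33_v3; [apply: v3_eq; ring | ring].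
apply: (Kc_eq (K_add he hG (K_add he hG (L (w 0 0)) (Y (w 1 0))) (Z (w 2 0))));
  rewrite /= ?v3_add; [apply: v3_eq; ring | ring].
Qed.

Theorem theorem3p3 (R : realType) (r : pt R -> pt R -> Prop) :
  is_equivalence_R4 r ->
  (GN_invariant r <->
   exists H : R -> Prop, additive_subgroup H /\
     ((forall x y : pt R, r x y <-> (y.1 = x.1 /\ H (y.2 - x.2))) \/
      (forall x y : pt R, r x y <-> H (y.2 - x.2)))).
Proof.
move=> he; split.
  move=> hG.
  have hadd : additive_subgroup (fun t => Kc r (0, t)).
    split; first by case: he => hr _; apply: hr.
    move=> a c ha hc; have := K_sub he hG ha hc; by rewrite /= subrr.
  exists (fun t => Kc r (0, t)); split => //.
  case: (classic (exists p, Kc r p /\ p.1 <> 0)) => [[p [hp hp1]]|hn].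
    have hall := K0_all he hG hp (introN eqP hp1).
    right => x y; split.
      move/(r_K he hG) => h; have := K_sub he hG h (hall (y.1 - x.1)).
      by rewrite /= subrr subr0.
    move=> h; apply/(r_K he hG); have := K_add he hG h (hall (y.1 - x.1)).
    by rewrite /= add0r addr0.
  have z : forall p, Kc r p -> p.1 = 0.
    move=> p hp; apply: NNPP => hne; apply: hn; by exists p.
  left => x y; split.
    move/(r_K he hG) => h; have /= e := z _ h.
    split; first by apply/eqP; rewrite -subr_eq0 e.
    by move: h; rewrite e.
  move=> [e h]; apply/(r_K he hG); by rewrite e subrr.
move=> [H [[H0 Hsub] [hi|hi]]] S b hS x y /hi hxy; apply/hi; rewrite /newton_map /=.
  case: hxy => e h; split; first by rewrite e.
  by have -> : y.2 + b.2 - (x.2 + b.2) = y.2 - x.2 by ring.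
by have -> : y.2 + b.2 - (x.2 + b.2) = y.2 - x.2 by ring.
Qed.
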